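(* Suppose $\gamma=1$, i.e. $\delta=\lambda$. Then for $z\in[0,1)$, $$\mathbb{E}[z^B]=\left(\frac{1-\xi}{1-\xi/N}\right)^{N\mu/\xi}=(1-\phi y)^{\theta\frac{1-y}{y}},$$ where $\xi=\frac{q-z}{1-z}$, $y=\frac{z-q}{1-q}$, $\phi=1-\frac1N$ and $\theta=N\mu$. For $q=0$ the expression at $y=0$ is interpreted by continuity. In particular, if $q>0$, $$\mathbb{P}(B=0)=\left(1+\frac{q\phi}{1-q}\right)^{-\theta/q}.$$
   Context: Model: fix $\delta>0$, $\nu>0$ and $\alpha>\beta\ge 0$, and put $\lambda=\alpha-\beta>0$. The wild-type population is deterministic, of size $e^{\delta t}$ at time $t\ge0$. Mutants arise at the points of an inhomogeneous Poisson process on $[0,\infty)$ with intensity $\nu e^{\delta t}$. Each mutant arising at time $s$ founds a clone that evolves as a linear birth–death process started from one cell, with per-capita birth rate $\alpha$ and death rate $\beta$. Clones are independent of each other and of the Poisson process. For $N>1$ let $\tau=\log N/\delta$, and let $B$ be the total number of mutant cells alive at time $\tau$. Notation: $q=\beta/\alpha\in[0,1)$, $\gamma=\delta/\lambda$, $\mu=\nu/\alpha$. *)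

(* Defs.v *)
From Stdlib Require Import Reals Lra.
From Coquelicot Require Import Coquelicot.
Open Scope R_scope.

(* Transition probabilities p n t = P(Z_t = n | Z_0 = 1) of the linear
   birth-death process with per-capita birth rate al and death rate be:
   the (unique) stochastic solution of the Kolmogorov forward equations,
   started from one cell. *)
Definition lbd_forward_rhs (al be : R) (p : nat -> R -> R) (n : nat) (t : R) : R :=
  match n with
  | O => be * p 1%nat t
  | S m => al * INR m * p m t - INR n * (al + be) * p n t
           + be * INR (S n) * p (S n) t
  end.

Definition is_lbd_transition (al be : R) (p : nat -> R -> R) : Prop :=
  (forall n, p n 0 = if Nat.eqb n 1 then 1 else 0) /\
  (forall n, filterlim (p n) (at_right 0) (locally (p n 0))) /\
  (forall n t, 0 < t -> is_derive (p n) t (lbd_forward_rhs al be p n t)) /\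
  (forall n t, 0 <= t -> 0 <= p n t) /\
  (forall t, 0 <= t -> is_series (fun n => p n t) 1).

(* Mean number of mutant clones founded during [0, tau]
   (Poisson intensity nu e^{de s}). *)
Definition clone_mean (de nu tau : R) : R :=
  RInt (fun s => nu * exp (de * s)) 0 tau.

(* Law of the size at time tau of a single clone, whose founding time has
   density nu e^{de s} / clone_mean on [0, tau]. *)
Definition mark_law (de nu tau : R) (p : nat -> R -> R) (n : nat) : R :=
  RInt (fun s => nu * exp (de * s) * p n (tau - s)) 0 tau / clone_mean de nu tau.

Fixpoint conv_pow (r : nat -> R) (k : nat) (n : nat) : R :=
  match k with
  | O => if Nat.eqb n 0 then 1 else 0
  | S k' => sum_f_R0 (fun j => r j * conv_pow r k' (n - j)) n
  end.

(* P(B = n): B = sum over the Poisson points s <= tau of independent clone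
   sizes Z(tau - s), i.e. a compound Poisson sum. *)
Definition tau_of (de N : R) : R := ln N / de.

Definition law_B (de nu N : R) (p : nat -> R -> R) (n : nat) : R :=
  let tau := tau_of de N in
  let m := clone_mean de nu tau in
  Series (fun k => exp (- m) * m ^ k / INR (Factorial.fact k)
                   * conv_pow (mark_law de nu tau p) k n).

Definition pgf_B (de nu N : R) (p : nat -> R -> R) (z : R) : R :=
  Series (fun n => law_B de nu N p n * z ^ n).

(* Main.v *)
Require Import Defs.
From Stdlib Require Import Reals Lra Lia.
From Coquelicot Require Import Coquelicot.
Open Scope R_scope.

Definition ptil (p : nat -> R -> R) n t := p n (Rmax t 0).

Lemma series_term_le (a : nat -> R) l n :
  (forall k, 0 <= a k) -> is_series a l -> a n <= l.
Proof.
  intros Ha Hs.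
  assert (Hinc : forall k, sum_n a k <= sum_n a (S k)).
  { intros k. rewrite sum_Sn. unfold plus; simpl. specialize (Ha (S k)). lra. }
  assert (H := is_lim_seq_incr_compare (sum_n a) l Hs Hinc n).
  destruct n. rewrite sum_O in H. exact H.
  rewrite sum_Sn in H. unfold plus in H; simpl in H.
  assert (0 <= sum_n a n).
  { clear H. induction n. rewrite sum_O; auto. rewrite sum_Sn; unfold plus; simpl.
    specialize (Ha (S n)); lra. }
  lra.
Qed.

Lemma p_bounds al be p : is_lbd_transition al be p ->
  forall n t, 0 <= t -> 0 <= p n t <= 1.
Proof.
  intros [H1 [H2 [H3 [H4 H5]]]] n t Ht. split. auto.
  apply (series_term_le (fun k => p k t)); auto.
Qed.

Lemma ptil_bounds al be p : is_lbd_transition al be p ->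
  forall n t, 0 <= ptil p n t <= 1.
Proof.
  intros H n t. unfold ptil. apply (p_bounds al be); auto. apply Rmax_r.
Qed.

Lemma ptil_pos p n t : 0 <= t -> ptil p n t = p n t.
Proof. intros. unfold ptil. rewrite Rmax_left; auto. Qed.

Lemma ptil_cont al be p : is_lbd_transition al be p ->
  forall n x, 0 <= x -> continuous (ptil p n) x.
Proof.
  intros H n x Hx. destruct H as [H1 [H2 [H3 [H4 H5]]]].
  destruct (Req_dec x 0) as [->|Hx0].
  - apply filterlim_locally. intros eps.
    specialize (H2 n). apply filterlim_locally with (eps := eps) in H2.
    unfold at_right, within in H2. revert H2. apply filter_imp.
    intros y Hy. unfold ptil. rewrite (Rmax_left 0 0) by lra.
    destruct (Rlt_dec 0 y). rewrite Rmax_left by lra. auto.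
    rewrite Rmax_right by lra. apply ball_center.
  - assert (Hxp : 0 < x) by lra.
    apply continuous_ext_loc with (g := p n).
    + assert (Hl : locally x (fun y => 0 < y)).
      { exists (mkposreal x Hxp). intros y Hy. unfold ball in Hy; simpl in Hy.
        unfold AbsRing_ball, abs, minus, plus, opp in Hy; simpl in Hy.
        apply Rabs_lt_between in Hy. lra. }
      revert Hl. apply filter_imp. intros y Hy. unfold ptil. rewrite Rmax_left; lra.
    + apply (ex_derive_continuous (V := R_NormedModule) (p n)). eexists. apply H3. auto.
Qed.

Lemma ptil_derive al be p : is_lbd_transition al be p ->
  forall n x, 0 < x -> is_derive (ptil p n) x (lbd_forward_rhs al be (ptil p) n x).
Proof.
  intros H n x Hx. destruct H as [H1 [H2 [H3 [H4 H5]]]].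
  apply is_derive_ext_loc with (f := p n).
  + assert (Hl : locally x (fun y => 0 < y)).
    { exists (mkposreal x Hx). intros y Hy. unfold ball in Hy; simpl in Hy.
      unfold AbsRing_ball, abs, minus, plus, opp in Hy; simpl in Hy.
      apply Rabs_lt_between in Hy. lra. }
    revert Hl. apply filter_imp. intros y Hy. unfold ptil. rewrite Rmax_left; lra.
  + replace (lbd_forward_rhs al be (ptil p) n x) with (lbd_forward_rhs al be p n x).
    apply H3; auto.
    unfold lbd_forward_rhs. destruct n; rewrite !ptil_pos; lra.
Qed.


Lemma is_derive_mult' (f g : R -> R) x df dg :
  is_derive f x df -> is_derive g x dg ->
  is_derive (fun t => f t * g t) x (df * g x + f x * dg).
Proof.
  intros Hf Hg. apply (is_derive_mult f g x df dg Hf Hg). intros; apply Rmult_comm.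
Qed.

Lemma is_derive_plus' (f g : R -> R) x df dg :
  is_derive f x df -> is_derive g x dg ->
  is_derive (fun t => f t + g t) x (df + dg).
Proof. intros Hf Hg. apply (is_derive_plus f g x df dg Hf Hg). Qed.

Definition Kf al be z t := al * (1 - z) * exp ((al - be) * t) + al * z - be.
Definition gfun al be z t := 1 - (al - be) * (1 - z) * exp ((al - be) * t) / Kf al be z t.

Lemma Kf_pos al be z t : 0 <= be < al -> 0 <= z < 1 -> 0 <= t -> 0 < Kf al be z t.
Proof.
  intros Hab Hz Ht. unfold Kf.
  assert (1 <= exp ((al - be) * t)).
  { rewrite <- exp_0. destruct (Req_dec t 0). subst. rewrite Rmult_0_r. lra.
    left. apply exp_increasing. nra. }
  assert (0 <= al * (1 - z) * (exp ((al - be) * t) - 1)).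
  { apply Rmult_le_pos; [|lra]. nra. }
  nra.
Qed.

Definition rho al be z := 1 - (al - be) * (1 - z) / al.

Lemma gfun_range al be z t : 0 <= be < al -> 0 <= z < 1 -> 0 <= t ->
  0 <= gfun al be z t <= rho al be z.
Proof.
  intros Hab Hz Ht. assert (HK := Kf_pos al be z t Hab Hz Ht).
  assert (HE : 1 <= exp ((al - be) * t)).
  { rewrite <- exp_0. destruct (Req_dec t 0). subst. rewrite Rmult_0_r. lra.
    left. apply exp_increasing. nra. }
  unfold gfun, rho. unfold Kf in *. set (E := exp ((al - be) * t)) in *.
  split.
  - assert ((al - be) * (1 - z) * E / (al * (1 - z) * E + al * z - be) <= 1).
    { apply Rmult_le_reg_r with (al * (1 - z) * E + al * z - be). lra.
      unfold Rdiv. rewrite Rmult_assoc, Rinv_l by lra.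
      assert (0 <= be * (1 - z) * (E - 1)). { apply Rmult_le_pos; [|lra]. nra. }
      nra. }
    lra.
  - assert ((al - be) * (1 - z) / al <= (al - be) * (1 - z) * E / (al * (1 - z) * E + al * z - be)).
    { unfold Rdiv. apply Rmult_le_reg_r with (al * (al * (1 - z) * E + al * z - be)). nra.
      replace ((al - be) * (1 - z) * / al * (al * (al * (1 - z) * E + al * z - be)))
        with ((al - be) * (1 - z) * (al * (1 - z) * E + al * z - be)) by (field; lra).
      replace ((al - be) * (1 - z) * E * / (al * (1 - z) * E + al * z - be) * (al * (al * (1 - z) * E + al * z - be)))
        with ((al - be) * (1 - z) * E * al) by (field; lra).
      assert (0 <= (al - be) * (1 - z)) by nra.
      assert (0 <= al * z * (E - 1)). { apply Rmult_le_pos; [|lra]. nra. }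
      assert (al * (1 - z) * E + al * z - be <= E * al) by nra.
      replace ((al - be) * (1 - z) * E * al) with ((al - be) * (1 - z) * (E * al)) by ring.
      apply Rmult_le_compat_l; auto. }
    lra.
Qed.

Lemma rho_range al be z : 0 <= be < al -> 0 <= z < 1 -> rho al be z < 1.
Proof.
  intros. unfold rho. assert (0 < (al - be) * (1 - z) / al).
  { apply Rdiv_lt_0_compat; nra. } lra.
Qed.

Lemma gfun_0 al be z : 0 <= be < al -> 0 <= z < 1 -> gfun al be z 0 = z.
Proof.
  intros. unfold gfun, Kf. rewrite Rmult_0_r, exp_0. field. nra.
Qed.

Lemma gfun_derive al be z t : 0 <= be < al -> 0 <= z < 1 -> 0 <= t ->
  is_derive (gfun al be z) t ((al * gfun al be z t - be) * (gfun al be z t - 1)).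
Proof.
  intros Hab Hz Ht. assert (HK := Kf_pos al be z t Hab Hz Ht).
  unfold gfun. unfold Kf in *. auto_derive.
  - lra.
  - field. lra.
Qed.


Definition Gt al be z T t := gfun al be z (T - t).

Definition hM al be z (p : nat -> R -> R) T M t :=
  sum_n (fun n => ptil p n t * Gt al be z T t ^ n) M.

Definition DM al be z (p : nat -> R -> R) T M t :=
  - al * INR M * ptil p M t * Gt al be z T t ^ (S M)
  + be * INR (S M) * ptil p (S M) t * Gt al be z T t ^ M.

Lemma Gt_derive al be z T t : 0 <= be < al -> 0 <= z < 1 -> t <= T ->
  is_derive (Gt al be z T) t
   (- ((al * Gt al be z T t - be) * (Gt al be z T t - 1))).
Proof.
  intros Hab Hz Ht. unfold Gt.
  assert (H := is_derive_comp (gfun al be z) (fun t => T - t) t _ (-1)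
     (gfun_derive al be z (T - t) Hab Hz ltac:(lra))).
  assert (E : scal (-1) ((al * gfun al be z (T - t) - be) * (gfun al be z (T - t) - 1))
     = - ((al * gfun al be z (T - t) - be) * (gfun al be z (T - t) - 1))).
  { unfold scal; simpl; unfold mult; simpl. ring. }
  rewrite <- E. apply H. auto_derive; auto.
Qed.

Lemma hM_derive al be z p T : is_lbd_transition al be p ->
  0 <= be < al -> 0 <= z < 1 ->
  forall M t, 0 < t -> t <= T -> is_derive (hM al be z p T M) t (DM al be z p T M t).
Proof.
  intros Hp Hab Hz M t Ht HtT.
  assert (HG := Gt_derive al be z T t Hab Hz HtT).
  set (G := Gt al be z T t) in *.
  induction M.
  - unfold hM. apply is_derive_ext with (f := ptil p 0).
    { intros; rewrite sum_O; simpl; ring. }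
    assert (H := ptil_derive al be p Hp 0 t Ht).
    replace (DM al be z p T 0 t) with (be * ptil p 1 t). exact H.
    unfold DM; simpl; ring.
  - unfold hM. apply is_derive_ext with
      (f := fun t => hM al be z p T M t + ptil p (S M) t * Gt al be z T t ^ (S M)).
    { intros s. unfold hM. rewrite sum_Sn. reflexivity. }
    assert (H1 := ptil_derive al be p Hp (S M) t Ht).
    assert (H2 := is_derive_pow (Gt al be z T) (S M) t _ HG).
    assert (H3 := is_derive_mult' _ _ t _ _ H1 H2).
    assert (H4 := is_derive_plus' _ _ t _ _ IHM H3).
    eapply is_derive_ext. 2: { replace (DM al be z p T (S M) t) with
      (DM al be z p T M t + (lbd_forward_rhs al be (ptil p) (S M) t * Gt al be z T t ^ S M +
        ptil p (S M) t * (INR (S M) * - ((al * Gt al be z T t - be) * (Gt al be z T t - 1)) *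
        Gt al be z T t ^ Init.Nat.pred (S M)))). exact H4.
      unfold DM, lbd_forward_rhs. fold G. simpl pred. rewrite !S_INR. simpl pow. ring. }
    intros s. simpl. reflexivity.
Qed.

Lemma Gt_cont al be z T x : 0 <= be < al -> 0 <= z < 1 -> x <= T -> forall n,
  continuous (fun t => Gt al be z T t ^ n) x.
Proof.
  intros Hab Hz Hx n. apply (ex_derive_continuous (V := R_NormedModule)).
  eexists. apply is_derive_pow. apply Gt_derive; auto.
Qed.

Lemma hM_cont al be z p T : is_lbd_transition al be p ->
  0 <= be < al -> 0 <= z < 1 ->
  forall M x, 0 <= x -> x <= T -> continuous (hM al be z p T M) x.
Proof.
  intros Hp Hab Hz M x Hx HxT.
  assert (Hc : forall n, continuous (fun t => ptil p n t * Gt al be z T t ^ n) x).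
  { intros n. apply continuous_ext with (f := fun t => mult (ptil p n t) (Gt al be z T t ^ n)).
    reflexivity. apply (continuous_mult (K := R_AbsRing)). apply (ptil_cont al be); auto. apply Gt_cont; auto. }
  induction M.
  - apply continuous_ext with (f := fun t => ptil p 0 t * Gt al be z T t ^ 0).
    intros; unfold hM; rewrite sum_O; auto. apply Hc.
  - apply continuous_ext with (f := fun t => plus (hM al be z p T M t) (ptil p (S M) t * Gt al be z T t ^ (S M))).
    intros; unfold hM; rewrite sum_Sn; auto. apply (continuous_plus (V := R_NormedModule)); auto.
Qed.

Lemma DM_bound al be z p T : is_lbd_transition al be p ->
  0 <= be < al -> 0 <= z < 1 -> forall M c, c <= T ->
  Rabs (DM al be z p T M c) <= (al * INR M + be * INR (S M)) * rho al be z ^ M.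
Proof.
  intros Hp Hab Hz M c Hc. unfold DM.
  destruct (gfun_range al be z (T - c) Hab Hz ltac:(lra)) as [G0 G1].
  fold (Gt al be z T c) in G0, G1. set (G := Gt al be z T c) in *.
  set (r := rho al be z) in *.
  destruct (ptil_bounds al be p Hp M c) as [P0 P1].
  destruct (ptil_bounds al be p Hp (S M) c) as [Q0 Q1].
  set (P := ptil p M c) in *. set (Q := ptil p (S M) c) in *.
  assert (Hr1 := rho_range al be z Hab Hz).
  assert (X0 : 0 <= G ^ S M) by (apply pow_le; auto).
  assert (X1 : G ^ S M <= r ^ M).
  { simpl. replace (r ^ M) with (1 * r ^ M) by ring. apply Rmult_le_compat.
    lra. apply pow_le; lra. fold r in Hr1. lra. apply pow_incr; lra. }
  assert (Y0 : 0 <= G ^ M) by (apply pow_le; auto).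
  assert (Y1 : G ^ M <= r ^ M) by (apply pow_incr; lra).
  assert (HM : 0 <= INR M) by apply pos_INR.
  assert (HSM : 0 <= INR (S M)) by apply pos_INR.
  assert (A0 : 0 <= al * INR M * P * G ^ S M).
  { apply Rmult_le_pos; [|exact X0]. apply Rmult_le_pos; [|lra]. apply Rmult_le_pos; lra. }
  assert (A1 : al * INR M * P * G ^ S M <= al * INR M * r ^ M).
  { replace (al * INR M * r ^ M) with (al * INR M * (1 * r ^ M)) by ring.
    replace (al * INR M * P * G ^ S M) with ((al * INR M) * (P * G ^ S M)) by ring.
    apply Rmult_le_compat_l. apply Rmult_le_pos; lra.
    apply Rmult_le_compat; lra. }
  assert (B0 : 0 <= be * INR (S M) * Q * G ^ M).
  { apply Rmult_le_pos; [|exact Y0]. apply Rmult_le_pos; [|lra]. apply Rmult_le_pos; lra. }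
  assert (B1 : be * INR (S M) * Q * G ^ M <= be * INR (S M) * r ^ M).
  { replace (be * INR (S M) * r ^ M) with (be * INR (S M) * (1 * r ^ M)) by ring.
    replace (be * INR (S M) * Q * G ^ M) with ((be * INR (S M)) * (Q * G ^ M)) by ring.
    apply Rmult_le_compat_l. apply Rmult_le_pos; lra.
    apply Rmult_le_compat; lra. }
  apply Rabs_le. split; nra.
Qed.

Lemma hM_bound al be z p T : is_lbd_transition al be p ->
  0 <= be < al -> 0 <= z < 1 -> 0 <= T -> forall M,
  Rabs (hM al be z p T M T - hM al be z p T M 0) <=
     T * ((al * INR M + be * INR (S M)) * rho al be z ^ M).
Proof.
  intros Hp Hab Hz HT M.
  destruct (MVT_gen (hM al be z p T M) 0 T (DM al be z p T M)) as [c [Hc Heq]].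
  - intros x Hx. rewrite Rmin_left in Hx by lra. rewrite Rmax_right in Hx by lra.
    apply hM_derive; auto; lra.
  - intros x Hx. rewrite Rmin_left in Hx by lra. rewrite Rmax_right in Hx by lra.
    apply continuity_pt_filterlim. apply hM_cont; auto; lra.
  - rewrite Rmin_left in Hc by lra. rewrite Rmax_right in Hc by lra.
    rewrite Heq. rewrite Rabs_mult, Rmult_comm. rewrite (Rabs_right (T - 0)) by lra.
    replace (T - 0) with T by ring. apply Rmult_le_compat_l. lra.
    apply DM_bound with (T := T); auto. lra.
Qed.


Lemma lim_npow_pos r : 0 < r < 1 -> is_lim_seq (fun n => INR (S n) * r ^ n) 0.
Proof.
  intros Hr. apply ex_series_lim_0.
  apply ex_series_Rabs. apply ex_series_DAlembert with (k := r). lra.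
  - intros n. apply Rgt_not_eq. apply Rmult_lt_0_compat. apply lt_0_INR; lia. apply pow_lt; lra.
  - apply is_lim_seq_ext with (u := fun n => (1 + / INR (S n)) * r).
    { intros n. rewrite Rabs_right.
      rewrite !S_INR. simpl. field. split. apply Rgt_not_eq, pow_lt; lra.
      assert (0 <= INR n) by apply pos_INR. lra.
      apply Rle_ge. apply Rmult_le_pos. apply Rmult_le_pos. apply pos_INR. simpl. apply Rmult_le_pos; try lra. apply pow_le; lra.
      apply Rlt_le, Rinv_0_lt_compat. apply Rmult_lt_0_compat. apply lt_0_INR; lia. apply pow_lt; lra. }
    replace (Finite r) with (Finite ((1 + 0) * r)) by (f_equal; ring).
    apply is_lim_seq_mult'. 2: apply is_lim_seq_const.
    apply is_lim_seq_plus'. apply is_lim_seq_const.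
    assert (H := is_lim_seq_inv INR p_infty is_lim_seq_INR ltac:(discriminate)).
    simpl in H. apply is_lim_seq_incr_1 in H. exact H.
Qed.

Lemma lim_npow r : 0 <= r < 1 -> is_lim_seq (fun n => INR (S n) * r ^ n) 0.
Proof.
  intros Hr. set (r' := (1 + r) / 2).
  apply is_lim_seq_le_le with (u := fun _ => 0) (w := fun n => INR (S n) * r' ^ n).
  - intros n. split. apply Rmult_le_pos. apply pos_INR. apply pow_le; lra.
    apply Rmult_le_compat_l. apply pos_INR. apply pow_incr. unfold r'; lra.
  - apply is_lim_seq_const.
  - apply lim_npow_pos. unfold r'; lra.
Qed.

Lemma hM_T al be z p T M : 0 <= be < al -> 0 <= z < 1 -> 0 <= T ->
  hM al be z p T M T = sum_n (fun n => p n T * z ^ n) M.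
Proof.
  intros Hab Hz HT. unfold hM. apply sum_n_ext. intros n.
  unfold Gt. replace (T - T) with 0 by ring. rewrite gfun_0 by auto.
  rewrite ptil_pos by auto. reflexivity.
Qed.

Lemma hM_0 al be z p T M : is_lbd_transition al be p -> (1 <= M)%nat ->
  hM al be z p T M 0 = gfun al be z T.
Proof.
  intros [H1 _] HM. unfold hM, Gt. replace (T - 0) with T by ring.
  induction HM.
  - rewrite sum_Sn, sum_O. unfold plus; simpl. rewrite !ptil_pos by lra. rewrite !H1. simpl. ring.
  - rewrite sum_Sn. unfold plus; simpl. rewrite IHHM. rewrite ptil_pos by lra. rewrite H1.
    destruct m. lia. simpl. ring.
Qed.

Lemma pgf_bound al be z p T M : is_lbd_transition al be p ->
  0 <= be < al -> 0 <= z < 1 -> 0 <= T -> (1 <= M)%nat ->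
  Rabs (sum_n (fun n => p n T * z ^ n) M - gfun al be z T) <=
     T * ((al * INR M + be * INR (S M)) * rho al be z ^ M).
Proof.
  intros Hp Hab Hz HT HM. rewrite <- (hM_T al be z p T M) by auto.
  rewrite <- (hM_0 al be z p T M) by auto. apply hM_bound; auto.
Qed.

Lemma bound_lim al be z T0 : 0 <= be < al -> 0 <= z < 1 ->
  is_lim_seq (fun M => T0 * (al + be) * (INR (S M) * rho al be z ^ M)) 0.
Proof.
  intros Hab Hz. replace (Finite 0) with (Rbar_mult (T0 * (al + be)) 0) by (simpl; f_equal; ring).
  apply is_lim_seq_scal_l. apply lim_npow. split.
  - destruct (gfun_range al be z 0 Hab Hz (Rle_refl 0)). lra.
  - apply rho_range; auto.
Qed.

Lemma bound_le al be z T M : 0 <= be < al -> 0 <= z < 1 -> 0 <= T ->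
  T * ((al * INR M + be * INR (S M)) * rho al be z ^ M) <=
  T * (al + be) * (INR (S M) * rho al be z ^ M).
Proof.
  intros Hab Hz HT.
  assert (0 <= rho al be z ^ M).
  { apply pow_le. destruct (gfun_range al be z 0 Hab Hz (Rle_refl 0)). lra. }
  assert (INR M <= INR (S M)) by (apply le_INR; lia).
  assert (0 <= INR M) by apply pos_INR.
  replace (T * (al + be) * (INR (S M) * rho al be z ^ M)) with
    (T * ((al * INR (S M) + be * INR (S M)) * rho al be z ^ M)) by ring.
  apply Rmult_le_compat_l. auto. apply Rmult_le_compat_r. auto. nra.
Qed.

Lemma pgf_series al be z p T : is_lbd_transition al be p ->
  0 <= be < al -> 0 <= z < 1 -> 0 <= T ->
  is_series (fun n => p n T * z ^ n) (gfun al be z T).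
Proof.
  intros Hp Hab Hz HT.
  set (e := fun M => T * (al + be) * (INR (S M) * rho al be z ^ M)).
  assert (He := bound_lim al be z T Hab Hz). fold e in He.
  unfold is_series.
  change (is_lim_seq (sum_n (fun n => p n T * z ^ n)) (gfun al be z T)).
  apply is_lim_seq_le_le_loc with (u := fun M => gfun al be z T - e M) (w := fun M => gfun al be z T + e M).
  - exists 1%nat. intros M HM. assert (H1 := pgf_bound al be z p T M Hp Hab Hz HT HM).
    assert (H2 := bound_le al be z T M Hab Hz HT). fold (e M) in H2.
    apply Rabs_le_between in H1. lra.
  - replace (Finite (gfun al be z T)) with (Finite (gfun al be z T - 0)) by (f_equal; ring).
    apply is_lim_seq_minus'. apply is_lim_seq_const. auto.
  - replace (Finite (gfun al be z T)) with (Finite (gfun al be z T + 0)) by (f_equal; ring).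
    apply is_lim_seq_plus'. apply is_lim_seq_const. auto.
Qed.


Lemma cont_weight (h : R -> R) nu c tau s :
  continuous h (tau - s) -> continuous (fun s => nu * exp (c * s) * h (tau - s)) s.
Proof.
  intros Hh.
  apply continuous_ext with (f := fun s => mult (nu * exp (c * s)) (h (tau - s))). reflexivity.
  apply (continuous_mult (K := R_AbsRing)).
  - apply (ex_derive_continuous (V := R_NormedModule)). auto_derive. auto.
  - apply (continuous_comp (fun s => tau - s) h). 
    apply (ex_derive_continuous (V := R_NormedModule)). auto_derive. auto. exact Hh.
Qed.

Definition fn al be nu (p : nat -> R -> R) tau n s := nu * exp ((al - be) * s) * p n (tau - s).

Lemma fn_int al be nu p tau n : is_lbd_transition al be p -> 0 <= tau ->
  ex_RInt (fn al be nu p tau n) 0 tau.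
Proof.
  intros Hp Ht.
  apply ex_RInt_ext with (f := fun s => nu * exp ((al - be) * s) * ptil p n (tau - s)).
  { intros x Hx. rewrite Rmin_left in Hx by lra. rewrite Rmax_right in Hx by lra.
    unfold fn. rewrite ptil_pos by lra. auto. }
  apply (ex_RInt_continuous (V := R_CompleteNormedModule)). intros x Hx. rewrite Rmin_left in Hx by lra. rewrite Rmax_right in Hx by lra.
  apply cont_weight. apply (ptil_cont al be p Hp); lra.
Qed.

Definition gint al be z nu tau s := nu * exp ((al - be) * s) * gfun al be z (tau - s).

Lemma gint_int al be z nu tau : 0 <= be < al -> 0 <= z < 1 -> 0 <= tau ->
  ex_RInt (gint al be z nu tau) 0 tau.
Proof.
  intros Hab Hz Ht.
  apply (ex_RInt_continuous (V := R_CompleteNormedModule)). intros x Hx. rewrite Rmin_left in Hx by lra. rewrite Rmax_right in Hx by lra.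
  apply cont_weight. apply (ex_derive_continuous (V := R_NormedModule)). eexists.
  apply gfun_derive; auto; lra.
Qed.

Lemma is_RInt_sum_n (f : nat -> R -> R) (I : nat -> R) a b :
  (forall n, is_RInt (f n) a b (I n)) -> forall M,
  is_RInt (fun s => sum_n (fun n => f n s) M) a b (sum_n I M).
Proof.
  intros H M. induction M.
  - rewrite sum_O. eapply is_RInt_ext. 2: apply (H 0%nat). intros; rewrite sum_O; auto.
  - rewrite sum_Sn. eapply is_RInt_ext. 2: apply (is_RInt_plus _ _ _ _ _ _ IHM (H (S M))).
    intros; rewrite sum_Sn; auto.
Qed.

Lemma is_RInt_mult_r (f : R -> R) a b I c :
  is_RInt f a b I -> is_RInt (fun s => f s * c) a b (I * c).
Proof.
  intros H. apply (is_RInt_scal _ _ _ c) in H.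
  replace (I * c) with (scal c I). eapply is_RInt_ext. 2: exact H.
  intros; unfold scal; simpl; unfold mult; simpl; ring.
  unfold scal; simpl; unfold mult; simpl; ring.
Qed.

Lemma psum_int al be z nu p tau : is_lbd_transition al be p -> 0 <= tau -> forall M,
  is_RInt (fun s => nu * exp ((al - be) * s) * sum_n (fun n => p n (tau - s) * z ^ n) M) 0 tau
    (sum_n (fun n => RInt (fn al be nu p tau n) 0 tau * z ^ n) M).
Proof.
  intros Hp Ht M.
  eapply is_RInt_ext. 2: { apply (is_RInt_sum_n (fun n s => fn al be nu p tau n s * z ^ n)).
    intros n. apply is_RInt_mult_r. apply (RInt_correct (V := R_CompleteNormedModule)). apply (fn_int al be); auto. }
  intros x _. simpl. induction M.
  - rewrite !sum_O. unfold fn. ring.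
  - rewrite !sum_Sn. rewrite IHM. unfold plus; simpl. unfold fn. ring.
Qed.

Lemma Rseries al be z nu p tau : is_lbd_transition al be p ->
  0 <= be < al -> 0 <= z < 1 -> 0 < nu -> 0 <= tau ->
  is_series (fun n => RInt (fn al be nu p tau n) 0 tau * z ^ n) (RInt (gint al be z nu tau) 0 tau).
Proof.
  intros Hp Hab Hz Hnu Ht.
  set (I := RInt (gint al be z nu tau) 0 tau).
  set (C := tau * (nu * exp ((al - be) * tau))).
  set (e := fun M => C * (tau * (al + be) * (INR (S M) * rho al be z ^ M))).
  assert (He : is_lim_seq e 0).
  { replace (Finite 0) with (Rbar_mult C 0) by (simpl; f_equal; ring).
    apply is_lim_seq_scal_l. apply bound_lim; auto. }
  unfold is_series.
  change (is_lim_seq (sum_n (fun n => RInt (fn al be nu p tau n) 0 tau * z ^ n)) I).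
  apply is_lim_seq_le_le_loc with (u := fun M => I - e M) (w := fun M => I + e M).
  - exists 1%nat. intros M HM.
    set (SM := sum_n (fun n => RInt (fn al be nu p tau n) 0 tau * z ^ n) M).
    assert (Hd := is_RInt_minus _ _ _ _ _ _ (psum_int al be z nu p tau Hp Ht M)
       (RInt_correct (V := R_CompleteNormedModule) _ _ _ (gint_int al be z nu tau Hab Hz Ht))).
    fold SM I in Hd.
    assert (Hd' : is_RInt (fun y => nu * exp ((al - be) * y) * sum_n (fun n => p n (tau - y) * z ^ n) M - gint al be z nu tau y) 0 tau (SM - I)) by exact Hd.
    assert (Heq := is_RInt_unique (V := R_CompleteNormedModule) _ _ _ _ Hd').
    assert (Hb : Rabs (RInt (fun y => nu * exp ((al - be) * y) * sum_n (fun n => p n (tau - y) * z ^ n) M - gint al be z nu tau y) 0 tau)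
       <= (tau - 0) * (nu * exp ((al - be) * tau) * (tau * (al + be) * (INR (S M) * rho al be z ^ M)))).
    { set (X := INR (S M) * rho al be z ^ M).
      apply abs_RInt_le_const. lra. eexists; exact Hd'.
      intros t Ht'. unfold minus, plus, opp; simpl. unfold gint.
      replace (nu * exp ((al - be) * t) * sum_n (fun n : nat => p n (tau - t) * z ^ n) M -
          (nu * exp ((al - be) * t) * gfun al be z (tau - t))) with
        ((nu * exp ((al - be) * t)) * (sum_n (fun n : nat => p n (tau - t) * z ^ n) M - gfun al be z (tau - t))) by ring.
      rewrite Rabs_mult. rewrite (Rabs_right (nu * _)).
      2: { apply Rle_ge, Rmult_le_pos. lra. apply Rlt_le, exp_pos. }
      assert (H1 := pgf_bound al be z p (tau - t) M Hp Hab Hz ltac:(lra) HM).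
      assert (H2 := bound_le al be z (tau - t) M Hab Hz ltac:(lra)).
      assert (H3 : 0 <= (al + be) * (INR (S M) * rho al be z ^ M)).
      { apply Rmult_le_pos. lra. apply Rmult_le_pos. apply pos_INR. apply pow_le.
        destruct (gfun_range al be z 0 Hab Hz (Rle_refl 0)). lra. }
      assert (H4 : exp ((al - be) * t) <= exp ((al - be) * tau)).
      { destruct (Req_dec t tau). subst; lra. left. apply exp_increasing. nra. }
      apply Rmult_le_compat. apply Rmult_le_pos. lra. apply Rlt_le, exp_pos. apply Rabs_pos.
      apply Rmult_le_compat_l; lra.
      assert (H5 : (tau - t) * (al + be) * (INR (S M) * rho al be z ^ M) <= tau * (al + be) * (INR (S M) * rho al be z ^ M)).
      { rewrite !Rmult_assoc. apply Rmult_le_compat_r. auto. lra. }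
      fold X in H1, H2, H3, H5 |- *. lra. }
    rewrite Heq in Hb.
    apply Rabs_le_between in Hb. unfold e, C. fold SM. split; nra.
  - replace (Finite I) with (Finite (I - 0)) by (f_equal; ring).
    apply is_lim_seq_minus'. apply is_lim_seq_const. auto.
  - replace (Finite I) with (Finite (I + 0)) by (f_equal; ring).
    apply is_lim_seq_plus'. apply is_lim_seq_const. auto.
Qed.


Lemma sum_n_nonneg (a : nat -> R) N : (forall n, 0 <= a n) -> 0 <= sum_n a N.
Proof.
  intros H. induction N. rewrite sum_O; auto. rewrite sum_Sn. unfold plus; simpl. specialize (H (S N)). lra.
Qed.

Lemma sum_n_le' (a b : nat -> R) N : (forall n, a n <= b n) -> sum_n a N <= sum_n b N.
Proof. intros H. unfold sum_n. apply sum_n_m_le. auto. Qed.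

Lemma partial_le_series (a : nat -> R) l N : (forall n, 0 <= a n) -> is_series a l -> sum_n a N <= l.
Proof.
  intros Ha Hs. apply (is_lim_seq_incr_compare (sum_n a) l Hs).
  intros k. rewrite sum_Sn. unfold plus; simpl. specialize (Ha (S k)). lra.
Qed.

Lemma is_lim_seq_sum_n (u : nat -> nat -> R) (l : nat -> R) N :
  (forall n, is_lim_seq (fun K => u K n) (l n)) ->
  is_lim_seq (fun K => sum_n (u K) N) (sum_n l N).
Proof.
  intros H. induction N.
  - rewrite sum_O. eapply is_lim_seq_ext. 2: apply H. intros; rewrite sum_O; auto.
  - rewrite sum_Sn. eapply is_lim_seq_ext. 2: apply (is_lim_seq_plus' _ _ _ _ IHN (H (S N))).
    intros; rewrite sum_Sn; auto.
Qed.

Lemma fubini_nonneg (b : nat -> nat -> R) (L S : nat -> R) s :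
  (forall k n, 0 <= b k n) ->
  (forall n, is_series (fun k => b k n) (L n)) ->
  (forall k, is_series (fun n => b k n) (S k)) ->
  is_series S s -> is_series L s.
Proof.
  intros Hb HL HS Hs.
  assert (HSnn : forall k, 0 <= S k).
  { intros k. assert (H := is_lim_seq_le (fun _ => 0) (sum_n (fun n => b k n)) 0 (S k)).
    simpl in H. apply H. intros; apply sum_n_nonneg; auto. apply is_lim_seq_const. apply HS. }
  assert (HLnn : forall n, 0 <= L n).
  { intros n. assert (H := is_lim_seq_le (fun _ => 0) (sum_n (fun k => b k n)) 0 (L n)).
    simpl in H. apply H. intros; apply sum_n_nonneg; auto. apply is_lim_seq_const. apply HL. }
  assert (Hup : forall N, sum_n L N <= s).
  { intros N.
    assert (Hlim : is_lim_seq (fun K => sum_n (fun n => sum_n (fun k => b k n) K) N) (sum_n L N)).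
    { apply (is_lim_seq_sum_n (fun K n => sum_n (fun k => b k n) K)). intros n. apply HL. }
    assert (H := is_lim_seq_le (fun K => sum_n (fun n => sum_n (fun k => b k n) K) N) (fun _ => s) (sum_n L N) s). simpl in H. apply H; [| exact Hlim | apply is_lim_seq_const].
    intros K. rewrite (sum_n_switch (fun n k => b k n)).
    apply Rle_trans with (sum_n S K). apply sum_n_le'. intros k.
    apply partial_le_series; auto. apply partial_le_series; auto. }
  assert (Hlo : forall K, is_lim_seq (fun N => sum_n (fun k => sum_n (fun n => b k n) N) K) (sum_n S K)).
  { intros K. apply (is_lim_seq_sum_n (fun N k => sum_n (fun n => b k n) N)). intros k. apply HS. }
  unfold is_series. change (is_lim_seq (sum_n L) s).
  apply is_lim_seq_spec. intros eps.
  assert (Hs' := proj2 (is_lim_seq_spec (sum_n S) s) Hs).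
  assert (e2 : 0 < eps / 2) by (destruct eps; simpl; lra).
  destruct (Hs' (mkposreal _ e2)) as [K HK]. specialize (HK K (le_n K)). simpl in HK.
  assert (Hlo' := proj2 (is_lim_seq_spec _ _) (Hlo K)). destruct (Hlo' (mkposreal _ e2)) as [N0 HN0].
  exists N0. intros N HN. specialize (HN0 N HN). simpl in HN0.
  assert (HA : sum_n (fun k => sum_n (fun n => b k n) N) K <= sum_n L N).
  { rewrite <- (sum_n_switch (fun n k => b k n)). apply sum_n_le'. intros n.
    apply partial_le_series; auto. }
  specialize (Hup N). apply Rabs_lt_between in HK. apply Rabs_lt_between in HN0.
  apply Rabs_lt_between. split; lra.
Qed.

Lemma term_le_series (a : nat -> R) l n : (forall k, 0 <= a k) -> is_series a l -> a n <= l.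
Proof.
  intros Ha Hs. apply Rle_trans with (sum_n a n).
  - destruct n. rewrite sum_O; lra. rewrite sum_Sn. unfold plus; simpl.
    assert (0 <= sum_n a n) by (apply sum_n_nonneg; auto). lra.
  - apply partial_le_series; auto.
Qed.

Lemma is_series_mult_l (c : R) (a : nat -> R) l : is_series a l -> is_series (fun n => c * a n) (c * l).
Proof. intros H. apply (is_series_scal_l c) in H. exact H. Qed.

Lemma exp_series x : is_series (fun k => x ^ k / INR (Factorial.fact k)) (exp x).
Proof.
  assert (H := is_exp_Reals x). unfold is_pseries in H.
  eapply is_series_ext. 2: exact H. intros n. simpl. rewrite pow_n_pow. unfold scal; simpl; unfold mult; simpl. unfold Rdiv. ring.
Qed.

Lemma conv_nonneg r : (forall n, 0 <= r n) -> forall k n, 0 <= conv_pow r k n.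
Proof.
  intros Hr k. induction k; intros n; simpl.
  - destruct (n =? 0)%nat; lra.
  - apply cond_pos_sum. intros j. apply Rmult_le_pos; auto.
Qed.

Lemma conv_series r z Rz : (forall n, 0 <= r n) -> 0 <= z ->
  is_series (fun n => r n * z ^ n) Rz -> forall k,
  is_series (fun n => conv_pow r k n * z ^ n) (Rz ^ k).
Proof.
  intros Hr Hz HR k. induction k.
  - simpl. unfold is_series. change (is_lim_seq (sum_n (fun n => (if (n =? 0)%nat then 1 else 0) * z ^ n)) 1).
    eapply is_lim_seq_ext. 2: apply is_lim_seq_const. intros N. induction N.
    + rewrite sum_O. simpl. ring.
    + rewrite sum_Sn, <- IHN. unfold plus; simpl. ring.
  - assert (Hc := conv_nonneg r Hr k).
    assert (H := is_series_mult _ _ _ _ HR IHk).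
    assert (H1 : ex_series (fun n => Rabs (r n * z ^ n))).
    { eapply ex_series_ext. 2: (eexists; exact HR). intros n. rewrite Rabs_right; auto.
      apply Rle_ge, Rmult_le_pos; auto. apply pow_le; auto. }
    assert (H2 : ex_series (fun n => Rabs (conv_pow r k n * z ^ n))).
    { eapply ex_series_ext. 2: (eexists; exact IHk). intros n. rewrite Rabs_right; auto.
      apply Rle_ge, Rmult_le_pos; auto. apply pow_le; auto. }
    specialize (H H1 H2). simpl pow. eapply is_series_ext. 2: exact H.
    intros n. simpl. rewrite Rmult_comm, scal_sum. apply sum_eq. intros j Hj.
    replace (z ^ n) with (z ^ j * z ^ (n - j)). ring.
    rewrite <- pow_add. f_equal. lia.
Qed.

Definition poi (m : R) k := exp (- m) * m ^ k / INR (Factorial.fact k).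

Lemma compound r m z Rz z0 R0 : (forall n, 0 <= r n) -> 0 <= z -> 0 <= m ->
  is_series (fun n => r n * z ^ n) Rz -> 0 < z0 ->
  is_series (fun n => r n * z0 ^ n) R0 ->
  is_series (fun n => Series (fun k => poi m k * conv_pow r k n) * z ^ n) (exp (m * (Rz - 1))).
Proof.
  intros Hr Hz Hm HR Hz0 HR0.
  assert (Hpoi : forall k, 0 <= poi m k).
  { intros k. unfold poi. apply Rmult_le_pos. apply Rmult_le_pos. apply Rlt_le, exp_pos.
    apply pow_le; auto. apply Rlt_le, Rinv_0_lt_compat, INR_fact_lt_0. }
  assert (Hc := conv_nonneg r Hr).
  apply (fubini_nonneg (fun k n => poi m k * conv_pow r k n * z ^ n) _ (fun k => poi m k * Rz ^ k)).
  - intros k n. apply Rmult_le_pos. apply Rmult_le_pos; auto. apply pow_le; auto.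
  - intros n. apply is_series_scal_r. apply Series_correct.
    apply (ex_series_le (K := R_AbsRing) (V := R_CompleteNormedModule)) with (b := fun k => / z0 ^ n * (exp (- m) * ((m * R0) ^ k / INR (Factorial.fact k)))).
    + intros k. unfold norm; simpl. unfold abs; simpl. rewrite Rabs_right.
      2: apply Rle_ge, Rmult_le_pos; auto.
      assert (Hck : conv_pow r k n * z0 ^ n <= R0 ^ k).
      { apply (term_le_series (fun n => conv_pow r k n * z0 ^ n)).
        intros; apply Rmult_le_pos; auto; apply pow_le; lra.
        apply conv_series; auto; lra. }
      assert (Hzn : 0 < z0 ^ n) by (apply pow_lt; auto).
      assert (Hck' : conv_pow r k n <= R0 ^ k / z0 ^ n).
      { apply Rmult_le_reg_r with (z0 ^ n). auto. unfold Rdiv. rewrite Rmult_assoc, Rinv_l; lra. }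
      rewrite Rpow_mult_distr.
      replace (/ z0 ^ n * (exp (- m) * (m ^ k * R0 ^ k / INR (Factorial.fact k)))) with
        (poi m k * (R0 ^ k / z0 ^ n)).
      apply Rmult_le_compat_l; auto.
      unfold poi. field. split. apply INR_fact_neq_0. lra.
    + eexists. apply is_series_mult_l. apply is_series_mult_l. apply exp_series.
  - intros k. assert (H := is_series_mult_l (poi m k) _ _ (conv_series r z Rz Hr Hz HR k)).
    eapply is_series_ext; [|exact H]. intros n; simpl; ring.
  - replace (exp (m * (Rz - 1))) with (exp (- m) * exp (m * Rz)).
    assert (H := is_series_mult_l (exp (- m)) _ _ (exp_series (m * Rz))).
    eapply is_series_ext; [|exact H].
    intros k. unfold poi. rewrite Rpow_mult_distr. unfold Rdiv. change (@eq R (exp (- m) * (m ^ k * Rz ^ k * / INR (Factorial.fact k))) (exp (- m) * m ^ k * / INR (Factorial.fact k) * Rz ^ k)). ring.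
    rewrite <- exp_plus. f_equal. ring.
Qed.


Lemma clone_mean_val lam nu tau : 0 < lam ->
  clone_mean lam nu tau = nu / lam * (exp (lam * tau) - 1).
Proof.
  intros Hl. unfold clone_mean.
  assert (H : is_RInt (fun s => nu * exp (lam * s)) 0 tau
     (minus ((fun s => nu / lam * exp (lam * s)) tau) ((fun s => nu / lam * exp (lam * s)) 0))).
  { apply (is_RInt_derive (fun s => nu / lam * exp (lam * s))).
    - intros x _. auto_derive. auto. field. lra.
    - intros x _. apply (ex_derive_continuous (V := R_NormedModule)). auto_derive. auto. }
  rewrite (is_RInt_unique _ _ _ _ H).
  unfold minus, plus, opp; simpl. rewrite Rmult_0_r, exp_0. ring.
Qed.

Lemma gint_cont al be z nu tau x : 0 <= be < al -> 0 <= z < 1 -> x <= tau ->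
  continuous (gint al be z nu tau) x.
Proof.
  intros Hab Hz Hx. apply cont_weight. apply (ex_derive_continuous (V := R_NormedModule)). eexists.
  apply gfun_derive; auto; lra.
Qed.

Lemma Iz_val al be z nu tau : 0 <= be < al -> 0 <= z < 1 -> 0 <= tau ->
  al * z - be <> 0 ->
  RInt (gint al be z nu tau) 0 tau =
   nu / (al - be) * (exp ((al - be) * tau) - 1)
   - nu * (1 - z) * exp ((al - be) * tau) / (al * z - be) *
     (ln ((al - be) * exp ((al - be) * tau)) - ln (al * (1 - z) * exp ((al - be) * tau) + (al * z - be))).
Proof.
  intros Hab Hz Ht Hc.
  set (lam := al - be). set (E := exp (lam * tau)). set (c := al * z - be).
  set (F := fun s => nu / lam * exp (lam * s) - nu * (1 - z) * E / c * ln (al * (1 - z) * E + c * exp (lam * s))).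
  assert (HA : forall s, 0 <= s <= tau -> 0 < al * (1 - z) * E + c * exp (lam * s)).
  { intros s Hs. assert (exp (lam * s) <= E).
    { unfold E. destruct (Req_dec s tau). subst; lra. left; apply exp_increasing. unfold lam; nra. }
    assert (0 < exp (lam * s)) by apply exp_pos.
    replace (al * (1 - z) * E + c * exp (lam * s)) with (al * (1 - z) * (E - exp (lam * s)) + lam * exp (lam * s))
      by (unfold c, lam; ring).
    assert (0 <= al * (1 - z) * (E - exp (lam * s))). { apply Rmult_le_pos. nra. lra. }
    unfold lam in *. nra. }
  assert (H : is_RInt (gint al be z nu tau) 0 tau (minus (F tau) (F 0))).
  { apply (is_RInt_derive F).
  2: { intros x Hx. rewrite Rmin_left in Hx by lra. rewrite Rmax_right in Hx by lra.
    apply gint_cont; auto; lra. }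
  intros x Hx. rewrite Rmin_left in Hx by lra. rewrite Rmax_right in Hx by lra.
    specialize (HA x Hx). assert (HK := Kf_pos al be z (tau - x) Hab Hz ltac:(lra)).
    unfold F. auto_derive. lra.
    unfold gint, gfun. fold lam. unfold Kf in *. fold lam in HK |- *.
    assert (HE : E = exp (lam * (tau - x)) * exp (lam * x)).
    { unfold E. rewrite <- exp_plus. f_equal. ring. }
    rewrite HE in HA |- *. 
    assert (0 < exp (lam * x)) by apply exp_pos. assert (0 < exp (lam * (tau - x))) by apply exp_pos.
    match goal with |- ?a = ?b => change (@eq R a b) end.
    replace (al * (1 - z) * exp (lam * (tau - x)) + al * z - be) with (al * (1 - z) * exp (lam * (tau - x)) + c) in HK |- * by (unfold c; ring).
    field. split; [lra|split; [lra|split; [exact Hc|unfold lam; lra]]]. }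
  rewrite (is_RInt_unique _ _ _ _ H).
  - unfold minus, plus, opp; simpl. unfold F. rewrite Rmult_0_r, exp_0.
    fold lam E. replace (al * (1 - z) * E + c * E) with (lam * E) by (unfold lam, c; ring).
    replace (al * (1 - z) * E + c * 1) with (al * (1 - z) * E + c) by ring. ring.
Qed.

Lemma Iz_val0 al be z nu tau : 0 <= be < al -> 0 <= z < 1 -> 0 <= tau ->
  al * z - be = 0 ->
  RInt (gint al be z nu tau) 0 tau =
   (1 - (al - be) / al) * (nu / (al - be) * (exp ((al - be) * tau) - 1)).
Proof.
  intros Hab Hz Ht Hc.
  set (lam := al - be).
  set (F := fun s => (1 - lam / al) * (nu / lam) * exp (lam * s)).
  assert (H : is_RInt (gint al be z nu tau) 0 tau (minus (F tau) (F 0))).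
  { apply (is_RInt_derive F).
    2: { intros x Hx. rewrite Rmin_left in Hx by lra. rewrite Rmax_right in Hx by lra.
      apply gint_cont; auto; lra. }
    intros x Hx. rewrite Rmin_left in Hx by lra. rewrite Rmax_right in Hx by lra.
    unfold F. auto_derive. auto.
    unfold gint, gfun, Kf. fold lam.
    replace (al * (1 - z) * exp (lam * (tau - x)) + al * z - be) with (al * (1 - z) * exp (lam * (tau - x))) by lra.
    assert (0 < exp (lam * (tau - x))) by apply exp_pos.
    match goal with |- ?a = ?b => change (@eq R a b) end.
    field. split; [lra|split; [lra|split; [lra|unfold lam; lra]]]. }
  rewrite (is_RInt_unique _ _ _ _ H). unfold minus, plus, opp; simpl. unfold F.
  rewrite Rmult_0_r, exp_0. fold lam. ring.
Qed.


Lemma tau_pos lam N : 0 < lam -> 1 < N -> 0 < tau_of lam N.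
Proof.
  intros Hl HN. unfold tau_of. apply Rdiv_lt_0_compat; auto.
  rewrite <- ln_1. apply ln_increasing; lra.
Qed.

Lemma exp_tau lam N : 0 < lam -> 1 < N -> exp (lam * tau_of lam N) = N.
Proof.
  intros Hl HN. unfold tau_of. replace (lam * (ln N / lam)) with (ln N) by (field; lra).
  apply exp_ln. lra.
Qed.

Lemma mark_series al be nu p tau z : is_lbd_transition al be p ->
  0 <= be < al -> 0 <= z < 1 -> 0 < nu -> 0 <= tau -> clone_mean (al - be) nu tau <> 0 ->
  is_series (fun n => mark_law (al - be) nu tau p n * z ^ n)
    (RInt (gint al be z nu tau) 0 tau / clone_mean (al - be) nu tau).
Proof.
  intros Hp Hab Hz Hnu Ht Hm.
  assert (H := is_series_scal_r (/ clone_mean (al - be) nu tau) _ _ (Rseries al be z nu p tau Hp Hab Hz Hnu Ht)).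
  eapply is_series_ext. 2: exact H. intros n. unfold mark_law, fn. unfold Rdiv. match goal with |- ?a = ?b => change (@eq R a b) end. ring.
Qed.

Lemma mark_nonneg al be nu p tau n : is_lbd_transition al be p ->
  0 < nu -> 0 <= tau -> 0 < clone_mean (al - be) nu tau ->
  0 <= mark_law (al - be) nu tau p n.
Proof.
  intros Hp Hnu Ht Hm. unfold mark_law. apply Rmult_le_pos. 2: apply Rlt_le, Rinv_0_lt_compat; auto.
  apply RInt_ge_0; auto. apply (fn_int al be nu p tau n Hp Ht).
  intros x Hx. apply Rmult_le_pos. apply Rmult_le_pos. lra. apply Rlt_le, exp_pos.
  destruct Hp as [_ [_ [_ [H4 _]]]]. apply H4. lra.
Qed.

Lemma pgf_value de nu al be N p z : 0 < de -> 0 < nu -> 0 <= be -> be < al -> de = al - be -> 1 < N ->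
  is_lbd_transition al be p -> 0 <= z < 1 ->
  pgf_B de nu N p z = exp (RInt (gint al be z nu (tau_of de N)) 0 (tau_of de N) - clone_mean de nu (tau_of de N)).
Proof.
  intros Hde Hnu Hbe Hab Hdeq HN Hp Hz. subst de.
  assert (Hab' : 0 <= be < al) by lra.
  assert (Htau := tau_pos (al - be) N Hde HN).
  set (tau := tau_of (al - be) N) in *.
  assert (Hmv : clone_mean (al - be) nu tau = nu / (al - be) * (N - 1)).
  { rewrite clone_mean_val by auto. unfold tau. rewrite exp_tau; auto. }
  assert (Hm : 0 < clone_mean (al - be) nu tau).
  { rewrite Hmv. apply Rmult_lt_0_compat. apply Rdiv_lt_0_compat; lra. lra. }
  set (m := clone_mean (al - be) nu tau) in *.
  assert (Hr := mark_nonneg al be nu p tau).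
  assert (H1 := mark_series al be nu p tau z Hp Hab' Hz Hnu ltac:(lra) (Rgt_not_eq _ _ Hm)).
  assert (H2 := mark_series al be nu p tau (1/2) Hp Hab' ltac:(lra) Hnu ltac:(lra) (Rgt_not_eq _ _ Hm)).
  fold m in H1, H2.
  assert (H := compound (mark_law (al - be) nu tau p) m z _ (1/2) _ (fun n => Hr n Hp Hnu ltac:(lra) Hm)
     (proj1 Hz) ltac:(lra) H1 ltac:(lra) H2).
  unfold pgf_B. transitivity (exp (m * (RInt (gint al be z nu tau) 0 tau / m - 1))).
  - apply is_series_unique. exact H.
  - f_equal. field. lra.
Qed.


Lemma lim_quot (h : R -> R) d : is_derive h 0 d -> h 0 = 0 -> is_lim (fun x => h x / x) 0 d.
Proof.
  intros Hd H0. apply is_derive_Reals in Hd. apply is_lim_spec. intros eps.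
  destruct (Hd eps (cond_pos eps)) as [delta Hdel].
  simpl. exists delta. intros y Hy Hy0.
  unfold ball in Hy; simpl in Hy. unfold AbsRing_ball, abs, minus, plus, opp in Hy; simpl in Hy.
  assert (Hy' : Rabs y < delta). { revert Hy. rewrite Ropp_0, Rplus_0_r. auto. }
  specialize (Hdel y Hy0 Hy'). rewrite Rplus_0_l, H0 in Hdel.
  replace (h y / y) with ((h y - 0) / y) by (unfold Rdiv; ring). exact Hdel.
Qed.

Lemma logpgf_c de nu al be N z : 0 < de -> 0 < nu -> 0 <= be -> be < al -> de = al - be -> 1 < N ->
  0 <= z < 1 -> al * z - be <> 0 ->
  RInt (gint al be z nu (tau_of de N)) 0 (tau_of de N) - clone_mean de nu (tau_of de N) =
  - nu * (1 - z) * N / (al * z - be) * (ln ((al - be) * N) - ln (al * (1 - z) * N + (al * z - be))).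
Proof.
  intros Hde Hnu Hbe Hab Hdeq HN Hz Hc. subst de.
  assert (Htau := tau_pos (al - be) N Hde HN).
  rewrite Iz_val by (auto; lra). rewrite clone_mean_val by auto. rewrite exp_tau by auto.
  field. split; [exact Hc|lra].
Qed.

Lemma logpgf_0 de nu al be N z : 0 < de -> 0 < nu -> 0 <= be -> be < al -> de = al - be -> 1 < N ->
  0 <= z < 1 -> al * z - be = 0 ->
  RInt (gint al be z nu (tau_of de N)) 0 (tau_of de N) - clone_mean de nu (tau_of de N) =
  - (nu / al) * (N - 1).
Proof.
  intros Hde Hnu Hbe Hab Hdeq HN Hz Hc. subst de.
  assert (Htau := tau_pos (al - be) N Hde HN).
  rewrite Iz_val0 by (auto; lra). rewrite clone_mean_val by auto. rewrite exp_tau by auto.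
  field. lra.
Qed.


Theorem mainTheorem5 (de nu al be N : R) (p : nat -> R -> R) :
  0 < de -> 0 < nu -> 0 <= be -> be < al -> de = al - be -> 1 < N ->
  is_lbd_transition al be p ->
  let q := be / al in
  let mu := nu / al in
  let phi := 1 - 1 / N in
  let theta := N * mu in
  let G := fun xi => Rpower ((1 - xi) / (1 - xi / N)) (N * mu / xi) in
  let F := fun y => Rpower (1 - phi * y) (theta * (1 - y) / y) in
  (forall z, 0 <= z < 1 ->
     let xi := (q - z) / (1 - z) in
     let y := (z - q) / (1 - q) in
     (xi <> 0 -> pgf_B de nu N p z = G xi) /\
     (xi = 0 -> is_lim G 0 (pgf_B de nu N p z)) /\
     (y <> 0 -> pgf_B de nu N p z = F y) /\
     (y = 0 -> is_lim F 0 (pgf_B de nu N p z))) /\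
  (0 < q -> law_B de nu N p 0 = Rpower (1 + q * phi / (1 - q)) (- theta / q)).
Proof.
  intros Hde Hnu Hbe Hab Hdeq HN Hp q mu phi theta G F.
  assert (Hal : 0 < al) by lra.
  assert (Hmain : forall z, 0 <= z < 1 ->
     let xi := (q - z) / (1 - z) in
     let y := (z - q) / (1 - q) in
     (xi <> 0 -> pgf_B de nu N p z = G xi) /\
     (xi = 0 -> is_lim G 0 (pgf_B de nu N p z)) /\
     (y <> 0 -> pgf_B de nu N p z = F y) /\
     (y = 0 -> is_lim F 0 (pgf_B de nu N p z))).
  { intros z Hz xi y.
    assert (Hpgf := pgf_value de nu al be N p z Hde Hnu Hbe Hab Hdeq HN Hp Hz).
    set (c := al * z - be).
    assert (Hxi : xi = - c / (al * (1 - z))) by (unfold xi, q, c; field; lra).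
    assert (Hy : y = c / (al - be)) by (unfold y, q, c; field; lra).
    assert (HA : 0 < al * (1 - z) * N + c).
    { replace (al * (1 - z) * N + c) with (al * (1 - z) * (N - 1) + (al - be)) by (unfold c; ring).
      assert (0 <= al * (1 - z) * (N - 1)). { apply Rmult_le_pos. nra. lra. } lra. }
    assert (HlN : 0 < (al - be) * N) by nra.
    split; [|split; [|split]].
    - intros Hxi0. assert (Hc : c <> 0). { intros Hc0. apply Hxi0. rewrite Hxi, Hc0. field. lra. }
      rewrite Hpgf, (logpgf_c de nu al be N z) by auto. unfold G, Rpower. f_equal.
      replace ((1 - xi) / (1 - xi / N)) with ((al - be) * N / (al * (1 - z) * N + c)).
      rewrite ln_div by auto. replace (N * mu / xi) with (- nu * (1 - z) * N / c). fold c. ring.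
      rewrite Hxi. unfold mu. field. repeat split; lra.
      rewrite Hxi. unfold c. field. repeat split; try lra. unfold c in HA; lra.
    - intros Hxi0. assert (Hc : c = 0).
      { rewrite Hxi in Hxi0. unfold Rdiv in Hxi0. apply Rmult_integral in Hxi0.
        destruct Hxi0 as [H|H]. lra. exfalso. apply Rinv_neq_0_compat in H; auto. nra. }
      rewrite Hpgf, (logpgf_0 de nu al be N z) by auto.
      set (h := fun x => ln ((1 - x) / (1 - x / N))).
      assert (Hd : is_derive h 0 (-1 + 1 / N)).
      { unfold h. auto_derive. repeat split; try lra. apply Rdiv_lt_0_compat; lra.
        field. lra. }
      assert (H0 : h 0 = 0). { unfold h. replace ((1 - 0) / (1 - 0 / N)) with 1 by (field; lra). apply ln_1. }
      assert (Hl := lim_quot h _ Hd H0).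
      assert (Hl2 := is_lim_comp_continuous _ (fun u => exp (N * mu * u)) 0 _ Hl
         ltac:(apply (ex_derive_continuous (V := R_NormedModule)); auto_derive; auto)).
      replace (exp (- (nu / al) * (N - 1))) with (exp (N * mu * (-1 + 1 / N))).
      2: { f_equal. unfold mu. field. lra. }
      eapply is_lim_ext_loc. 2: exact Hl2.
      simpl. exists (mkposreal 1 Rlt_0_1). intros x _ Hx0. unfold G, Rpower, h. f_equal. field. auto.
    - intros Hy0. assert (Hc : c <> 0). { intros Hc0. apply Hy0. rewrite Hy, Hc0. field. lra. }
      rewrite Hpgf, (logpgf_c de nu al be N z) by auto. unfold F, Rpower. f_equal.
      replace (1 - phi * y) with ((al * (1 - z) * N + c) / ((al - be) * N)).
      rewrite ln_div by auto. replace (theta * (1 - y) / y) with (nu * (1 - z) * N / c). fold c.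
      field. auto.
      rewrite Hy. unfold theta, mu, c. field. repeat split; try lra.
      exact Hc.
      rewrite Hy. unfold phi, c. field. lra.
    - intros Hy0. assert (Hc : c = 0).
      { rewrite Hy in Hy0. unfold Rdiv in Hy0. apply Rmult_integral in Hy0.
        destruct Hy0 as [H|H]. lra. exfalso. apply Rinv_neq_0_compat in H; auto. lra. }
      rewrite Hpgf, (logpgf_0 de nu al be N z) by auto.
      set (h := fun x => (1 - x) * ln (1 - phi * x)).
      assert (Hphi : 0 < phi < 1).
      { unfold phi. assert (0 < 1 / N) by (apply Rdiv_lt_0_compat; lra).
        assert (1 / N < 1).
        { apply Rmult_lt_reg_r with N. lra. unfold Rdiv. rewrite Rmult_assoc, Rinv_l; lra. }
        lra. }
      assert (Hd : is_derive h 0 (- phi)).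
      { unfold h. auto_derive. lra.
        replace (1 + - (phi * 0)) with 1 by ring. rewrite ln_1. field. }
      assert (H0 : h 0 = 0). { unfold h. rewrite Rmult_0_r, Rminus_0_r, ln_1. ring. }
      assert (Hl := lim_quot h _ Hd H0).
      assert (Hl2 := is_lim_comp_continuous _ (fun u => exp (theta * u)) 0 _ Hl
         ltac:(apply (ex_derive_continuous (V := R_NormedModule)); auto_derive; auto)).
      replace (exp (- (nu / al) * (N - 1))) with (exp (theta * - phi)).
      2: { f_equal. unfold theta, mu, phi. field. lra. }
      eapply is_lim_ext_loc. 2: exact Hl2.
      simpl. exists (mkposreal 1 Rlt_0_1). intros x _ Hx0. unfold F, Rpower, h. f_equal. field. auto. }
  split. exact Hmain.
  intros Hq.
  assert (Hz0 : pgf_B de nu N p 0 = law_B de nu N p 0).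
  { unfold pgf_B. apply is_series_unique. unfold is_series.
    change (is_lim_seq (sum_n (fun n => law_B de nu N p n * 0 ^ n)) (law_B de nu N p 0)).
    eapply is_lim_seq_ext; [|apply is_lim_seq_const]. intros M; induction M.
    - rewrite sum_O. simpl. ring.
    - rewrite sum_Sn, <- IHM. unfold plus; simpl. ring. }
  assert (Hq1 : q < 1). { unfold q. apply Rmult_lt_reg_r with al. lra. unfold Rdiv. rewrite Rmult_assoc, Rinv_l; lra. }
  rewrite <- Hz0. destruct (Hmain 0 (conj (Rle_refl 0) Rlt_0_1)) as [_ [_ [H3 _]]].
  rewrite H3. unfold F. f_equal. field. lra. field. split; lra.
  unfold Rdiv. rewrite Rminus_0_l. intros H. apply Rmult_integral in H. destruct H as [H|H]. lra.
  apply Rinv_neq_0_compat in H; lra.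
Qed.
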